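(* Suppose $\mathcal F\subset\binom{[n]}{4}$ satisfies $\gamma_3(\mathcal F)\geq 3$ and $|F\cap F'|=1$ for all distinct $F,F'\in\mathcal F$. Then $\mathcal F$ is isomorphic to $\mathcal L_3$.
   Context: For $S\subset[n]$, $\mathcal F(\overline S)=\{F\in\mathcal F: F\cap S=\emptyset\}$, and $\gamma_3(\mathcal F)=\min_{S\in\binom{[n]}{3}}|\mathcal F(\overline S)|$. $\mathcal L_3$ is the family of lines of the projective plane of order 3: on the vertex set $\mathbb Z_{13}$, $\mathcal L_3=\{\{i,i+1,i+3,i+9\}: i\in\mathbb Z_{13}\}$ (addition modulo 13). Isomorphic means equal up to an injective relabeling of vertices. *)

(* Defs.v *)
From mathcomp Require Import all_boot.
Set Implicit Arguments. Unset Strict Implicit. Unset Printing Implicit Defensive.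

Definition avoid (n : nat) (FF : {set {set 'I_n}}) (S : {set 'I_n}) : {set {set 'I_n}} :=
  [set F in FF | [disjoint F & S]].

Definition gamma3_ge (n : nat) (FF : {set {set 'I_n}}) (k : nat) : Prop :=
  forall S : {set 'I_n}, #|S| = 3 -> k <= #|avoid FF S|.

Definition z13 (x : nat) : 'I_13 := inord (x %% 13).

(* Lines of PG(2,3): {i, i+1, i+3, i+9} mod 13 *)
Definition L3 : {set {set 'I_13}} :=
  [set [set z13 i; z13 (i + 1); z13 (i + 3); z13 (i + 9)] | i : 'I_13].

Definition fam_iso (m n : nat) (G : {set {set 'I_m}}) (FF : {set {set 'I_n}}) : Prop :=
  exists f : 'I_m -> 'I_n, injective f /\ FF = [set f @: (L : {set 'I_m}) | L in G].

(* Main.v *)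
Require Import Defs.
From mathcomp Require Import all_boot.
Set Implicit Arguments. Unset Strict Implicit. Unset Printing Implicit Defensive.

Definition q0 : 'I_4 := @Ordinal 4 0 isT.
Definition q1 : 'I_4 := @Ordinal 4 1 isT.
Definition q2 : 'I_4 := @Ordinal 4 2 isT.
Definition q3 : 'I_4 := @Ordinal 4 3 isT.
Definition t0 : 'I_3 := @Ordinal 3 0 isT.
Definition t1 : 'I_3 := @Ordinal 3 1 isT.
Definition t2 : 'I_3 := @Ordinal 3 2 isT.
Lemma third0 (w : 'I_3) : w != t1 -> w != t2 -> w = t0.
Proof. by case: w => [[|[|[|m]]] H] // _ _; apply: val_inj. Qed.
Lemma third1 (w : 'I_3) : w != t0 -> w != t2 -> w = t1.
Proof. by case: w => [[|[|[|m]]] H] // _ _; apply: val_inj. Qed.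
Lemma third2 (w : 'I_3) : w != t0 -> w != t1 -> w = t2.
Proof. by case: w => [[|[|[|m]]] H] // _ _; apply: val_inj. Qed.

Lemma latin3 (f g : 'I_3 -> 'I_3 -> 'I_3) :
 (forall j, f t0 j = j) -> (forall j, g t0 j = j) -> (forall i, f i t0 = i) ->
 (forall i j j', f i j = f i j' -> j = j') -> (forall i i' j, f i j = f i' j -> i = i') ->
 (forall i j j', g i j = g i j' -> j = j') -> (forall i i' j, g i j = g i' j -> i = i') ->
 (forall i j i' j', f i j = f i' j' -> g i j = g i' j' -> i = i' /\ j = j') ->
 (f t1 t1 = t2 /\ f t1 t2 = t0 /\ f t2 t1 = t0 /\ f t2 t2 = t1) /\
     (g t1 t0 = t2 /\ g t1 t1 = t0 /\ g t1 t2 = t1 /\ g t2 t0 = t1 /\ g t2 t1 = t2 /\ g t2 t2 = t0).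
Proof.
move=> f0 g0 fi0 lfj lfi lgj lgi ort.
have nf i j j' : j != j' -> f i j != f i j' by move=> ne; apply: contra ne => /eqP /lfj ->.
have nfi i i' j : i != i' -> f i j != f i' j by move=> ne; apply: contra ne => /eqP /lfi ->.
have ng i j j' : j != j' -> g i j != g i j' by move=> ne; apply: contra ne => /eqP /lgj ->.
have ngi i i' j : i != i' -> g i j != g i' j by move=> ne; apply: contra ne => /eqP /lgi ->.
have f12 : f t1 t2 = t0.
  by apply: third0; [move: (nf t1 t2 t0 isT); rewrite fi0 | move: (nfi t1 t0 t2 isT); rewrite f0].
have f11 : f t1 t1 = t2.
  by apply: third2; [move: (nf t1 t1 t2 isT); rewrite f12 | move: (nf t1 t1 t0 isT); rewrite fi0].
have f21 : f t2 t1 = t0.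
  by apply: third0; [move: (nfi t2 t0 t1 isT); rewrite f0 | move: (nf t2 t1 t0 isT); rewrite fi0].
have f22 : f t2 t2 = t1.
  by apply: third1; [move: (nf t2 t2 t1 isT); rewrite f21 | move: (nf t2 t2 t0 isT); rewrite fi0].
have g10 : g t1 t0 = t2.
  apply: third2; first by move: (ngi t1 t0 t0 isT); rewrite g0.
  apply/eqP => g10.
  have g12 : g t1 t2 = t0.
    by apply: third0; [move: (ng t1 t2 t0 isT); rewrite g10 | move: (ngi t1 t0 t2 isT); rewrite g0].
  have g11 : g t1 t1 = t2.
    by apply: third2; [move: (ng t1 t1 t2 isT); rewrite g12 | move: (ngi t1 t0 t1 isT); rewrite g0].
  have e1 : f t1 t1 = f t0 t2 by rewrite f11 f0.
  have e2 : g t1 t1 = g t0 t2 by rewrite g11 g0.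
  by case: (ort _ _ _ _ e1 e2).
have g11 : g t1 t1 = t0.
  by apply: third0; [move: (ngi t1 t0 t1 isT); rewrite g0 | move: (ng t1 t1 t0 isT); rewrite g10].
have g12 : g t1 t2 = t1.
  by apply: third1; [move: (ng t1 t2 t1 isT); rewrite g11 | move: (ng t1 t2 t0 isT); rewrite g10].
have g20 : g t2 t0 = t1.
  by apply: third1; [move: (ngi t2 t0 t0 isT); rewrite g0 | move: (ngi t2 t1 t0 isT); rewrite g10].
have g21 : g t2 t1 = t2.
  by apply: third2; [move: (ngi t2 t1 t1 isT); rewrite g11 | move: (ng t2 t1 t0 isT); rewrite g20].
have g22 : g t2 t2 = t0.
  by apply: third0; [move: (ng t2 t2 t0 isT); rewrite g20 | move: (ng t2 t2 t1 isT); rewrite g21].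
by [].
Qed.

Lemma card4 (T : finType) (a b c d : T) : a != b -> a != c -> a != d -> b != c -> b != d -> c != d -> #|[set a; b; c; d]| = 4.
Proof.
move=> ab ac ad bc bd cd.
have -> : [set a; b; c; d] = a |: (b |: (c |: [set d])) by apply/setP => z; rewrite !inE !orbA.
rewrite !cardsU1 cards1 !inE (negbTE ab) (negbTE ac) (negbTE ad) (negbTE bc) (negbTE bd) (negbTE cd).
by [].
Qed.

Ltac boolcase := repeat match goal with |- context [?z == ?a] => case: (z == a) end.

Lemma I3P (k : 'I_3) : k = t0 \/ k = t1 \/ k = t2.
Proof. by case: k => [[|[|[|m]]] H] //; [left|right;left|right;right]; apply: val_inj. Qed.

Lemma img3 (T : finType) (f : 'I_3 -> T) : [set f k | k : 'I_3] = [set f t0; f t1; f t2].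
Proof.
apply/setP => z; apply/imsetP/idP => [[k _ ->]|].
  by rewrite !inE; case: (I3P k) => [->|[->|->]]; rewrite eqxx ?orbT.
rewrite !inE => /orP[/orP[]|] /eqP ->; by [exists t0 | exists t1 | exists t2].
Qed.

Lemma sub4 (T : finType) (a b c d : T) (S : {set T}) :
  a \in S -> b \in S -> c \in S -> d \in S -> [set a; b; c; d] \subset S.
Proof.
move=> aS bS cS dS; apply/subsetP => z; rewrite !inE => /orP[/orP[/orP[]|]|] /eqP -> //.
Qed.

Definition phin n (x : 'I_n) (P : 'I_4 -> 'I_3 -> 'I_n) (m : nat) : 'I_n :=
  match m with 0 => x | 1 => P q0 t0 | 2 => P q3 t0 | 3 => P q0 t1 | 4 => P q1 t0
  | 5 => P q1 t1 | 6 => P q2 t1 | 7 => P q1 t2 | 8 => P q3 t1 | 9 => P q0 t2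
  | 10 => P q2 t0 | 11 => P q2 t2 | _ => P q3 t2 end.

Section Plane.
Variable n : nat.
Variable FF : {set {set 'I_n}}.
Hypothesis H4 : forall F, F \in FF -> #|F| = 4.
Hypothesis Hg : gamma3_ge FF 3.
Hypothesis H1 : forall F F', F \in FF -> F' \in FF -> F != F' -> #|F :&: F'| = 1.

Lemma uniq_line F G p q : F \in FF -> G \in FF -> p != q -> p \in F -> q \in F ->
  p \in G -> q \in G -> F = G.
Proof.
move=> FF' GF pq pF qF pG qG; apply/eqP; apply: contraT => FG.
have /eqP := H1 FF' GF FG; rewrite eqn_leq => /andP[/card_le1P h _].
have pI : p \in F :&: G by rewrite inE pF pG.
have qI : q \in F :&: G by rewrite inE qF qG.
by move: (h p pI q); rewrite qI !inE eq_sym (negbTE pq).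
Qed.

Lemma meet_ex F G : F \in FF -> G \in FF -> exists p, p \in F /\ p \in G.
Proof.
move=> FF' GF; case: (eqVneq F G) => [<-|FG].
  have : 0 < #|F| by rewrite H4.
  by case/card_gt0P => p pF; exists p.
have : 0 < #|F :&: G| by rewrite H1.
by case/card_gt0P => p; rewrite inE => /andP[]; exists p.
Qed.

Lemma deg3 L p : L \in FF -> p \in L ->
  3 <= #|[set F in FF | (p \in F) && (F != L)]|.
Proof.
move=> LF pL.
have cS : #|L :\ p| = 3 by have := cardsD1 p L; rewrite H4 // pL add1n => -[<-].
apply: leq_trans (Hg cS) _; apply: subset_leq_card; apply/subsetP => F.
rewrite !inE => /andP[FF' dis]; rewrite FF' /=.
have [r [rF rL]] := meet_ex FF' LF.
have rp : r = p.
  apply/eqP; apply: contraT => rp.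
  by have := disjointFr dis rF; rewrite !inE rp rL.
subst r; rewrite rF /=; apply: contraT; rewrite negbK => /eqP FL; subst F.
have : 0 < #|L :\ p| by rewrite cS.
case/card_gt0P => s sS.
by have := disjointFl dis sS; rewrite (subsetP (subsetDl L [set p]) s sS).
Qed.

Definition covered p := exists F, F \in FF /\ p \in F.

Lemma proj_line L a q : L \in FF -> covered a -> a \notin L -> q \in L ->
  exists F, [/\ F \in FF, a \in F & q \in F].
Proof.
move=> LF [L' [L'F aL']] aL qL.
pose D := [set F in FF | a \in F].
have cD : 4 <= #|D|.
  rewrite (cardsD1 L') inE L'F aL' /= add1n ltnS.
  apply: leq_trans (deg3 L'F aL') _; apply: subset_leq_card; apply/subsetP => F.
  by rewrite !inE => /andP[-> /andP[-> ->]].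
pose m F := odflt a [pick r in F :&: L].
have mP F : F \in D -> m F \in F :&: L.
  rewrite inE => /andP[FF' _]; rewrite /m; case: pickP => [//|h].
  have [r [rF rL']] := meet_ex FF' LF.
  by have := h r; rewrite inE rF rL'.
have minj : {in D &, injective m}.
  move=> F G FD GD e.
  have := mP F FD; have := mP G GD; rewrite e !inE => /andP[rG rL] /andP[rF _].
  move: FD GD; rewrite !inE => /andP[FF' aF] /andP[GF aG].
  have ar : a != m G by apply: contraNneq aL => ->.
  exact: (uniq_line FF' GF ar aF rF aG rG).
have eL : [set m F | F in D] = L.
  apply/eqP; rewrite eqEcard card_in_imset // H4 // cD andbT.
  by apply/subsetP => r /imsetP[F FD ->]; have := mP F FD; rewrite inE => /andP[].
move: qL; rewrite -eL => /imsetP[F FD ->].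
have := mP F FD; move: FD; rewrite !inE => /andP[FF' aF] /andP[mF _].
by exists F.
Qed.

Lemma line_ex a q : covered a -> covered q -> a != q ->
  exists F, [/\ F \in FF, a \in F & q \in F].
Proof.
move=> ca [L [LF qL]] aq.
case: (boolP (a \in L)) => aL; first by exists L.
exact: (proj_line LF ca aL qL).
Qed.



Definition Ln (P : 'I_4 -> 'I_3 -> 'I_n) i j :=
  odflt set0 [pick F in FF | (P q0 i \in F) && (P q1 j \in F)].
Definition Fv (P : 'I_4 -> 'I_3 -> 'I_n) g i j :=
  odflt t0 [pick k | P g k \in Ln P i j].

Section Grid.
Variable x : 'I_n.
Variable P : 'I_4 -> 'I_3 -> 'I_n.
Hypothesis SM : forall g, x |: [set P g k | k : 'I_3] \in FF.
Hypothesis Sx : forall g k, P g k != x.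
Hypothesis Sinj : forall g k h l, P g k = P h l -> g = h /\ k = l.

Let M g := x |: [set P g k | k : 'I_3].

Lemma inMP g p : p \in M g -> p = x \/ exists k, p = P g k.
Proof using All.
rewrite /M !inE => /orP[/eqP->|/imsetP[k _ ->]]; [by left| by right; exists k].
Qed.
Lemma PinM g k : P g k \in M g.
Proof using All. by rewrite /M !inE; apply/orP; right; apply/imsetP; exists k. Qed.
Lemma xinM g : x \in M g.
Proof using All. by rewrite /M !inE eqxx. Qed.

Lemma covP g k : covered (P g k).
Proof using All. by exists (M g); split; [exact: SM | exact: PinM]. Qed.
Lemma covx : covered x.
Proof using All. by exists (M q0); split; [exact: SM | exact: xinM]. Qed.

Lemma Pne g k h l : g != h -> P g k != P h l.
Proof using All. by move=> gh; apply/eqP => /Sinj [e _]; rewrite e eqxx in gh. Qed.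

Lemma noxline F g k h l : F \in FF -> P g k \in F -> P h l \in F -> g != h -> x \notin F.
Proof using All.
move=> FF' gF hF gh; apply/negP => xF.
have xg : x != P g k by rewrite eq_sym Sx.
have e := uniq_line FF' (SM g) xg xF gF (xinM g) (PinM g k).
move: hF; rewrite e => /inMP [/eqP|[k' /Sinj [e' _]]]; first by rewrite (negbTE (Sx h l)).
by rewrite e' eqxx in gh.
Qed.

Lemma meet_grp F g : F \in FF -> x \notin F -> exists k, P g k \in F.
Proof using All.
move=> FF' xF; have [p [pF pM]] := meet_ex FF' (SM g).
case/inMP: pM => [e|[k e]]; first by rewrite -e pF in xF.
by exists k; rewrite -e.
Qed.

Lemma meet_grp_uniq F g k l : F \in FF -> x \notin F -> P g k \in F -> P g l \in F -> k = l.
Proof using All.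
move=> FF' xF kF lF; apply/eqP; apply: contraT => kl.
have ne : P g k != P g l by apply: contra kl => /eqP /Sinj [_ ->].
have e := uniq_line FF' (SM g) ne kF lF (PinM g k) (PinM g l).
by rewrite e xinM in xF.
Qed.

Lemma LnP i j : [/\ Ln P i j \in FF, P q0 i \in Ln P i j & P q1 j \in Ln P i j].
Proof using All.
rewrite /Ln; case: pickP => [F /andP[FF' /andP[a b]] //|h].
have [F [FF' a b]] := line_ex (covP q0 i) (covP q1 j) (@Pne q0 i q1 j isT).
by have := h F; rewrite FF' a b.
Qed.

Lemma Ln_uniq F i j : F \in FF -> P q0 i \in F -> P q1 j \in F -> F = Ln P i j.
Proof using All.
move=> FF' a b; have [L1 a' b'] := LnP i j.
exact: (uniq_line FF' L1 (@Pne q0 i q1 j isT) a b a' b').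
Qed.

Lemma Ln_nox i j : x \notin Ln P i j.
Proof using All. by have [L1 a b] := LnP i j; exact: (noxline L1 a b). Qed.

Lemma FvP g i j : P g (Fv P g i j) \in Ln P i j.
Proof using All.
rewrite /Fv; case: pickP => [k //|h].
have [L1 _ _] := LnP i j.
have [k kF] := meet_grp g L1 (Ln_nox i j).
by have := h k; rewrite kF.
Qed.

Lemma FvU g i j k : P g k \in Ln P i j -> Fv P g i j = k.
Proof using All.
move=> kF; have [L1 _ _] := LnP i j.
exact: (meet_grp_uniq L1 (Ln_nox i j) (FvP g i j) kF).
Qed.

Lemma Fv0 i j : Fv P q0 i j = i.
Proof using All. by apply: FvU; have [] := LnP i j. Qed.
Lemma Fv1 i j : Fv P q1 i j = j.
Proof using All. by apply: FvU; have [] := LnP i j. Qed.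

Lemma latin_j g i j j' : g != q0 -> Fv P g i j = Fv P g i j' -> j = j'.
Proof using All.
move=> g0 e.
have [L1 a1 _] := LnP i j; have [L2 a2 b2] := LnP i j'.
have c1 := FvP g i j; have c2 := FvP g i j'; rewrite -e in c2.
have ne : P q0 i != P g (Fv P g i j) by apply: Pne; rewrite eq_sym.
have eL := uniq_line L1 L2 ne a1 c1 a2 c2.
by rewrite -eL in b2; have := FvU b2; rewrite Fv1.
Qed.

Lemma latin_i g i i' j : g != q1 -> Fv P g i j = Fv P g i' j -> i = i'.
Proof using All.
move=> g0 e.
have [L1 _ a1] := LnP i j; have [L2 b2 a2] := LnP i' j.
have c1 := FvP g i j; have c2 := FvP g i' j; rewrite -e in c2.
have ne : P q1 j != P g (Fv P g i j) by apply: Pne; rewrite eq_sym.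
have eL := uniq_line L1 L2 ne a1 c1 a2 c2.
by rewrite -eL in b2; have := FvU b2; rewrite Fv0.
Qed.

Lemma ortho i j i' j' : Fv P q2 i j = Fv P q2 i' j' -> Fv P q3 i j = Fv P q3 i' j' ->
  i = i' /\ j = j'.
Proof using All.
move=> e2 e3.
have [L1 _ _] := LnP i j; have [L2 a2 b2] := LnP i' j'.
have c1 := FvP q2 i j; have c2 := FvP q2 i' j'; rewrite -e2 in c2.
have d1 := FvP q3 i j; have d2 := FvP q3 i' j'; rewrite -e3 in d2.
have eL := uniq_line L1 L2 (@Pne q2 (Fv P q2 i j) q3 (Fv P q3 i j) isT) c1 d1 c2 d2.
rewrite -eL in a2 b2.
by have := FvU a2; have := FvU b2; rewrite Fv0 Fv1.
Qed.

End Grid.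


Lemma img_perm (T : finType) (Q : 'I_3 -> T) (s : 'I_3 -> 'I_3) : injective s ->
  [set Q (s k) | k : 'I_3] = [set Q k | k : 'I_3].
Proof.
move=> si; case: (injF_bij si) => s' sK Ks.
apply/setP => p; apply/imsetP/imsetP => [[k _ ->]|[k _ ->]].
  by exists (s k).
by exists (s' k) => //; rewrite Ks.
Qed.

Lemma relabel x (Q : 'I_4 -> 'I_3 -> 'I_n) :
  (forall g, x |: [set Q g k | k : 'I_3] \in FF) ->
  (forall g k, Q g k != x) ->
  (forall g k h l, Q g k = Q h l -> g = h /\ k = l) ->
  exists P : 'I_4 -> 'I_3 -> 'I_n,
  [/\ (forall g, x |: [set P g k | k : 'I_3] \in FF),
      (forall g k, P g k != x),
      (forall g k h l, P g k = P h l -> g = h /\ k = l) &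
      [/\ (forall j, Fv P q2 t0 j = j), (forall j, Fv P q3 t0 j = j) &
          (forall i, Fv P q2 i t0 = i)]].
Proof.
move=> SM Sx Si.
have inj2c : injective (fun i => Fv Q q2 i t0).
  by move=> i i'; apply: (latin_i SM Sx Si (g:=q2)).
have inj2r : injective (Fv Q q2 t0).
  by move=> j j'; apply: (latin_j SM Sx Si (g:=q2)).
have inj3r : injective (Fv Q q3 t0).
  by move=> j j'; apply: (latin_j SM Sx Si (g:=q3)).
case: (injF_bij inj2c) => h hK Kh.
pose tau i := h (Fv Q q2 t0 i).
have tauE i : Fv Q q2 (tau i) t0 = Fv Q q2 t0 i by exact: Kh.
have tinj : injective tau.
  by move=> i i' e; apply: inj2r; rewrite -!tauE e.
have tau0 : tau t0 = t0 by apply: inj2c; rewrite /= tauE.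
pose sig g := if g == q0 then tau else if g == q1 then id
              else if g == q2 then Fv Q q2 t0 else Fv Q q3 t0.
have sig0 : sig q0 = tau by rewrite /sig eqxx.
have sig1 : sig q1 = id by rewrite /sig (negbTE (isT : q1 != q0)) eqxx.
have sig2 : sig q2 = Fv Q q2 t0.
  by rewrite /sig (negbTE (isT : q2 != q0)) (negbTE (isT : q2 != q1)) eqxx.
have sig3 : sig q3 = Fv Q q3 t0.
  by rewrite /sig (negbTE (isT : q3 != q0)) (negbTE (isT : q3 != q1)) (negbTE (isT : q3 != q2)).
have sinj g : injective (sig g).
  rewrite /sig; case: ifP => _; first exact: tinj.
  case: ifP => _; first by move=> ? ?.
  by case: ifP => _.
pose P g k := Q g (sig g k).
have imE g : [set P g k | k : 'I_3] = [set Q g k | k : 'I_3].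
  exact: (img_perm (Q g) (sinj g)).
have SMP g : x |: [set P g k | k : 'I_3] \in FF by rewrite imE.
have SxP g k : P g k != x by exact: Sx.
have SiP g k h' l : P g k = P h' l -> g = h' /\ k = l.
  move=> /Si [e1 e2]; subst h'; split => //; exact: (sinj g _ _ e2).
have LnE i j : Ln P i j = Ln Q (tau i) j.
  have [L1 a b] := LnP SMP SxP SiP i j.
  apply: (Ln_uniq SM Sx Si L1).
    by move: a; rewrite /P sig0.
  by move: b; rewrite /P sig1.
exists P; split => //; split.
- move=> j; apply: (FvU SMP SxP SiP); rewrite LnE tau0 /P sig2.
  exact: (FvP SM Sx Si).
- move=> j; apply: (FvU SMP SxP SiP); rewrite LnE tau0 /P sig3.
  exact: (FvP SM Sx Si).
- move=> i; apply: (FvU SMP SxP SiP); rewrite LnE /P sig2 -tauE.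
  exact: (FvP SM Sx Si).
Qed.


Lemma enum_card (T : finType) (A : {set T}) k : #|A| = k ->
  exists q : 'I_k -> T, injective q /\ A = [set q i | i : 'I_k].
Proof.
move=> <-; exists (@enum_val T (mem A)); split; first exact: enum_val_inj.
apply/setP => p; apply/idP/imsetP => [pA|[i _ ->]]; last exact: enum_valP.
by exists (enum_rank_in pA p) => //; rewrite enum_rankK_in.
Qed.

Lemma setup : 3 <= n -> exists x (Q : 'I_4 -> 'I_3 -> 'I_n),
  [/\ (forall g, x |: [set Q g k | k : 'I_3] \in FF),
      (forall g k, Q g k != x) &
      (forall g k h l, Q g k = Q h l -> g = h /\ k = l)].
Proof.
move=> Hn.
pose S := [set widen_ord Hn i | i : 'I_3].
have cS : #|S| = 3.
  rewrite card_imset ?cardsT ?card_ord //.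
  by move=> a b e; apply: val_inj; exact: (congr1 val e).
have : 0 < #|avoid FF S| by apply: leq_trans (Hg cS).
case/card_gt0P => L0; rewrite inE => /andP[L0F _].
have : 1 < #|L0| by rewrite H4.
case/card_gt1P => x [y [xL yL xy]].
have : 0 < #|[set F in FF | (y \in F) && (F != L0)]| by apply: leq_trans (deg3 L0F yL).
case/card_gt0P => N; rewrite inE => /andP[NF /andP[yN NL]].
have xN : x \notin N.
  apply/negP => xN; have := uniq_line NF L0F xy xN yN xL yL.
  by move/eqP; rewrite (negbTE NL).
have [nq [nqi eN]] := enum_card (H4 NF).
have nqN g : nq g \in N by rewrite eN; apply/imsetP; exists g.
have cx : covered x by exists L0.
have hQ g : exists q : 'I_3 -> 'I_n, [/\ x |: [set q k | k : 'I_3] \in FF,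
     nq g \in [set q k | k : 'I_3], injective q & x \notin [set q k | k : 'I_3]].
  have xn : x != nq g by apply: contraNneq xN => ->.
  have [F [FF' xF nF]] := line_ex cx (ex_intro _ N (conj NF (nqN g))) xn.
  have c3 : #|F :\ x| = 3 by have := cardsD1 x F; rewrite H4 // xF add1n => -[<-].
  have [q [qi eF]] := enum_card c3.
  exists q; rewrite -eF setD1K //; split => //.
    by rewrite !inE eq_sym xn.
  by rewrite setD11.
have [Q hQ'] := fin_all_exists hQ.
exists x, Q; split.
- by move=> g; case: (hQ' g).
- move=> g k; case: (hQ' g) => _ _ _ xq; apply: contraNneq xq => <-.
  by apply/imsetP; exists k.
- move=> g k h l e.
  case: (eqVneq g h) => [gh|gh].
    by subst h; split => //; case: (hQ' g) => _ _ qi _; exact: qi.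
  exfalso.
  case: (hQ' g) => Mg ng _ xg; case: (hQ' h) => Mh nh _ xh.
  have pg : Q g k \in x |: [set Q g k | k : 'I_3] by rewrite !inE; apply/orP; right; apply/imsetP; exists k.
  have ph : Q g k \in x |: [set Q h k | k : 'I_3] by rewrite !inE e; apply/orP; right; apply/imsetP; exists l.
  have xp : x != Q g k by apply: contraNneq xg => ->; apply/imsetP; exists k.
  have e1 := uniq_line Mg Mh xp (setU11 _ _) pg (setU11 _ _) ph.
  have ngh : nq g != nq h by apply: contra gh => /eqP /nqi ->.
  have ng' : nq g \in x |: [set Q h k | k : 'I_3] by rewrite -e1 !inE ng orbT.
  have nh' : nq h \in x |: [set Q h k | k : 'I_3] by rewrite !inE nh orbT.
  have e2 := uniq_line Mh NF ngh ng' nh' (nqN g) (nqN h).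
  by move: xN; rewrite -e2 setU11.
Qed.

Lemma memeq (A B : {set 'I_n}) : A \in FF -> B = A -> B \in FF.
Proof. by move=> h ->. Qed.

Ltac setsolve := apply/setP => z; rewrite !inE; boolcase; done.

Lemma final x (P : 'I_4 -> 'I_3 -> 'I_n) :
  (forall g, x |: [set P g k | k : 'I_3] \in FF) ->
  (forall g k, P g k != x) ->
  (forall g k h l, P g k = P h l -> g = h /\ k = l) ->
  (forall j, Fv P q2 t0 j = j) -> (forall j, Fv P q3 t0 j = j) ->
  (forall i, Fv P q2 i t0 = i) -> fam_iso L3 FF.
Proof.
move=> SM Sx Si N1 N2 N3.
have lfj i j j' : Fv P q2 i j = Fv P q2 i j' -> j = j' by apply: (latin_j SM Sx Si).
have lfi i i' j : Fv P q2 i j = Fv P q2 i' j -> i = i' by apply: (latin_i SM Sx Si).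
have lgj i j j' : Fv P q3 i j = Fv P q3 i j' -> j = j' by apply: (latin_j SM Sx Si).
have lgi i i' j : Fv P q3 i j = Fv P q3 i' j -> i = i' by apply: (latin_i SM Sx Si).
have [[f11 [f12 [f21 f22]]] [g10 [g11 [g12 [g20 [g21 g22]]]]]] :=
  latin3 N1 N2 N3 lfj lfi lgj lgi (ortho SM Sx Si).
have Pn g k h l : g != h -> P g k != P h l by apply: (Pne SM Sx Si).
have GLeq i j : Ln P i j = [set P q0 i; P q1 j; P q2 (Fv P q2 i j); P q3 (Fv P q3 i j)].
  have [L1 a b] := LnP SM Sx Si i j.
  apply/esym/eqP; rewrite eqEcard sub4 ?(FvP SM Sx Si) //= H4 // card4 ?Pn //.
have GLin i j : [set P q0 i; P q1 j; P q2 (Fv P q2 i j); P q3 (Fv P q3 i j)] \in FF.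
  by rewrite -GLeq; case: (LnP SM Sx Si i j).
pose phi (v : 'I_13) := phin x P (val v).
have phiz k : phi (z13 k) = phin x P (k %% 13) by rewrite /phi /z13 /= inordK // ltn_mod.
pose Lc (c : nat) := [set z13 c; z13 (c + 1); z13 (c + 3); z13 (c + 9)].
have lineP c : c < 13 -> Lc c \in L3 by move=> hc; apply/imsetP; exists (Ordinal hc).
have imgc c : [set phi v | v in Lc c] = [set phin x P (c %% 13); phin x P ((c + 1) %% 13);
     phin x P ((c + 3) %% 13); phin x P ((c + 9) %% 13)].
  by rewrite /Lc !imsetU !imset_set1 !phiz.
have Mlit g : x |: [set P g k | k : 'I_3] = [set x; P g t0; P g t1; P g t2].
  by rewrite img3; apply/setP => z; rewrite !inE !orbA.
have Sx1 g k : P g k = x -> False by move=> e; move: (Sx g k); rewrite e eqxx.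
have Sx2 g k : x = P g k -> False by move=> e; move: (Sx g k); rewrite -e eqxx.
exists phi; split.
  move=> [u hu] [v hv]; rewrite /phi /=.
  do 13 (case: u hu => [|u] hu; [do 13 (case: v hv => [|v] hv; [rewrite /=; first
     [ by move=> _; apply: val_inj
     | by move/Sx1
     | by move/Sx2
     | by move/Si => [] /(congr1 val)
     | by move/Si => [] _ /(congr1 val) ] |]); by [] |]); by [].

have MF F g k : F \in FF -> x \in F -> P g k \in F -> F = x |: [set P g k | k : 'I_3].
  move=> FF' xF kF; apply: (uniq_line FF' (SM g) _ xF kF).
  - by rewrite eq_sym Sx.
  - by rewrite !inE eqxx.
  - exact: (PinM SM Sx Si).
apply/setP => F; apply/idP/imsetP.
- move=> FF'.
  case: (boolP (x \in F)) => xF.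
  + have [L1 _ _] := LnP SM Sx Si t0 t0.
    have [r [rF rL]] := meet_ex FF' L1.
    move: rL; rewrite GLeq !inE => /orP[/orP[/orP[]|]|] /eqP e; subst r;
      rewrite (MF _ _ _ FF' xF rF) Mlit.
    * by exists (Lc 0); [exact: lineP | rewrite imgc /=; setsolve].
    * by exists (Lc 4); [exact: lineP | rewrite imgc /=; setsolve].
    * by exists (Lc 10); [exact: lineP | rewrite imgc /=; setsolve].
    * by exists (Lc 12); [exact: lineP | rewrite imgc /=; setsolve].
  + have [i iF] := meet_grp SM Sx Si q0 FF' xF.
    have [j jF] := meet_grp SM Sx Si q1 FF' xF.
    rewrite (Ln_uniq SM Sx Si FF' iF jF) GLeq.
    case: (I3P i) => [->|[->|->]]; case: (I3P j) => [->|[->|->]];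
      rewrite ?N1 ?N2 ?N3 ?f11 ?f12 ?f21 ?f22 ?g10 ?g11 ?g12 ?g20 ?g21 ?g22.
    * by exists (Lc 1); [exact: lineP | rewrite imgc /=; setsolve].
    * by exists (Lc 5); [exact: lineP | rewrite imgc /=; setsolve].
    * by exists (Lc 11); [exact: lineP | rewrite imgc /=; setsolve].
    * by exists (Lc 3); [exact: lineP | rewrite imgc /=; setsolve].
    * by exists (Lc 2); [exact: lineP | rewrite imgc /=; setsolve].
    * by exists (Lc 7); [exact: lineP | rewrite imgc /=; setsolve].
    * by exists (Lc 8); [exact: lineP | rewrite imgc /=; setsolve].
    * by exists (Lc 9); [exact: lineP | rewrite imgc /=; setsolve].
    * by exists (Lc 6); [exact: lineP | rewrite imgc /=; setsolve].
- case=> L /imsetP [c _ ->] ->.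
  have := imgc c; rewrite /Lc => ->.
  case: c => [[|[|[|[|[|[|[|[|[|[|[|[|[|m]]]]]]]]]]]]] hc] //=.
  + by apply: (memeq (SM q0)); rewrite Mlit; setsolve.
  + by apply: (memeq (GLin t0 t0)); rewrite ?N1 ?N2; setsolve.
  + by apply: (memeq (GLin t1 t1)); rewrite f11 g11; setsolve.
  + by apply: (memeq (GLin t1 t0)); rewrite N3 g10; setsolve.
  + by apply: (memeq (SM q1)); rewrite Mlit; setsolve.
  + by apply: (memeq (GLin t0 t1)); rewrite N1 N2; setsolve.
  + by apply: (memeq (GLin t2 t2)); rewrite f22 g22; setsolve.
  + by apply: (memeq (GLin t1 t2)); rewrite f12 g12; setsolve.
  + by apply: (memeq (GLin t2 t0)); rewrite N3 g20; setsolve.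
  + by apply: (memeq (GLin t2 t1)); rewrite f21 g21; setsolve.
  + by apply: (memeq (SM q2)); rewrite Mlit; setsolve.
  + by apply: (memeq (GLin t0 t2)); rewrite N1 N2; setsolve.
  + by apply: (memeq (SM q3)); rewrite Mlit; setsolve.
Qed.
End Plane.

Unset Implicit Arguments.

Theorem lemma4p7 (n : nat) (FF : {set {set 'I_n}}) :
  3 <= n ->
  (forall F, F \in FF -> #|F| = 4) ->
  gamma3_ge FF 3 ->
  (forall F F', F \in FF -> F' \in FF -> F != F' -> #|F :&: F'| = 1) ->
  fam_iso L3 FF.
Proof.
move=> Hn H4 Hg H1.
have [x [Q [SMQ SxQ SiQ]]] := setup H4 Hg H1 Hn.
have [P [SM Sx Si [N1 N2 N3]]] := relabel H4 Hg H1 SMQ SxQ SiQ.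
exact: (final H4 Hg H1 SM Sx Si N1 N2 N3).
Qed.
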